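(* Let $(f,g)$ and $(f',g')$ be two models in the model class $\Theta$, with induced conditional distributions $p_{f,g}$, $p_{f',g'}$ and logit vectors $u(x)$, $u'(x)$. Then $$d_{\mathrm{logit}}^2(p_{f,g},p_{f',g'}) \;\ge\; 2\, d_{\mathrm{KL}}(p_{f,g},p_{f',g'}).$$ If moreover there is $0<\tau<1/3$ such that both $(f,g)$ and $(f',g')$ are $\tau$-lower bounded, then $$d_{\mathrm{logit}}^2(p_{f,g},p_{f',g'}) \;\le\; \frac{4\log(\tau)^2}{\tau}\, d_{\mathrm{KL}}(p_{f,g},p_{f',g'}).$$
   Context: Let $\mathcal X$ be an input space with data distribution $p_x$, and $\mathcal Y=\{y_1,\dots,y_k\}$ a finite label set. The model class $\Theta$ consists of pairs $(f,g)$ with $f:\mathcal X\to\mathbb R^m$ (embedding) and $g:\mathcal Y\to\mathbb R^m$ (unembedding), normalized so that $\sum_{y\in\mathcal Y} g(y)=0$. Each model induces $p_{f,g}(y\mid x)=\exp(f(x)^\top g(y))/\sum_{y'\in\mathcal Y}\exp(f(x)^\top g(y'))$. Its logit vector is $u(x)=(f(x)^\top g(y_1),\dots,f(x)^\top g(y_k))^\top\in\mathbb R^k$ (similarly $u'$ for $(f',g')$). The logit distance is $d_{\mathrm{logit}}^2(p_{f,g},p_{f',g'})=\mathbb E_{x\sim p_x}\|u(x)-u'(x)\|_2^2$, and $d_{\mathrm{KL}}(p_{f,g},p_{f',g'})=\mathbb E_{x\sim p_x}\big[\mathrm{KL}(p_{f,g}(\cdot\mid x)\,\|\,p_{f',g'}(\cdot\mid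 x))\big]$. A model is $\tau$-lower bounded ($\tau>0$) if for $p_x$-almost every $x$, $\min_{y\in\mathcal Y} p_{f,g}(y\mid x)\ge\tau$. *)

(* Defs.v *)
From HB Require Import structures.
From mathcomp Require Import all_boot all_order all_algebra.
From mathcomp Require Import all_classical all_reals all_analysis.
Set Implicit Arguments. Unset Strict Implicit. Unset Printing Implicit Defensive.
Import Order.TTheory GRing.Theory Num.Theory.
Local Open Scope ring_scope.

Section Defs.
Context {R : realType} {d : measure_display} {X : measurableType d} {Y : finType} {m : nat}.

Definition unembedding_normalized (g : Y -> 'rV[R]_m) : Prop :=
  \sum_(y : Y) g y = 0.

Definition logit (f : X -> 'rV[R]_m) (g : Y -> 'rV[R]_m) (x : X) (y : Y) : R :=
  \sum_(i < m) f x 0 i * g y 0 i.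

Definition pmodel (f : X -> 'rV[R]_m) (g : Y -> 'rV[R]_m) (x : X) (y : Y) : R :=
  expR (logit f g x y) / \sum_(y' : Y) expR (logit f g x y').

Definition d_logit2 (P : probability X R) (f f' : X -> 'rV[R]_m) (g g' : Y -> 'rV[R]_m)
  : \bar R :=
  (\int[P]_x (\sum_(y : Y) (logit f g x y - logit f' g' x y) ^+ 2)%:E)%E.

Definition KL_at (f f' : X -> 'rV[R]_m) (g g' : Y -> 'rV[R]_m) (x : X) : R :=
  \sum_(y : Y) pmodel f g x y * ln (pmodel f g x y / pmodel f' g' x y).

Definition d_KL (P : probability X R) (f f' : X -> 'rV[R]_m) (g g' : Y -> 'rV[R]_m)
  : \bar R :=
  (\int[P]_x (KL_at f f' g g' x)%:E)%E.

Definition lower_bounded (P : probability X R) (f : X -> 'rV[R]_m) (g : Y -> 'rV[R]_m)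
  (tau : R) : Prop :=
  {ae P, forall x, forall y : Y, tau <= pmodel f g x y}.

End Defs.

(* Main.v *)
Require Import Defs.
From HB Require Import structures.
From mathcomp Require Import all_boot all_order all_algebra.
From mathcomp Require Import all_classical all_reals all_analysis.
From mathcomp Require Import ring lra measurable_realfun.
Import Order.TTheory GRing.Theory Num.Theory.
Local Open Scope ring_scope.

Section S.
Context {R : realType}.

Lemma chord (s r : R) : 0 <= s -> s <= r -> expR (- s) <= 1 - (s / r) * (1 - expR (- r)).
Proof.
move=> s0 sr.
have [r0|rn0] := eqVneq r 0.
  have -> : s = 0 by apply/le_anti; rewrite s0 -r0 sr.
  by rewrite oppr0 expR0 !mul0r subr0 ?lexx.
have rp : 0 < r by rewrite lt0r rn0 (le_trans s0 sr).
have t0 : 0 <= s / r by rewrite divr_ge0 // ltW.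
have t1 : s / r <= 1 by rewrite ler_pdivrMr // mul1r.
have H : expR (s/r * (-r) + (1 - s/r) * 0) <= s/r * expR(-r) + (1 - s/r) * expR 0
  := @convex_expR R (Itv01 t0 t1) (-r) 0.
move: H; rewrite expR0 mulr0 addr0 mulr1 mulrN divfK //.
by move=> H; apply: (le_trans H); lra.
Qed.

Lemma key_ineq (q x : R) : 0 <= q <= 1 -> 0 <= x ->
  q * (1 - q) * (1 - expR (- x)) <= x / 2 * (1 - q + q * expR (- x)).
Proof.
move=> /andP[q0 q1] x0.
have e0 : 0 < expR (- x) by apply: expR_gt0.
have e1 : expR (- x) <= 1 by rewrite expR_le1 oppr_le0.
have [x2|x2] := leP 2 x.
  have h0 : 0 <= (1 - q) * (1 - q * (1 - expR (- x))).
    apply: mulr_ge0; first lra. nra.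
  have h2 : 0 <= (x / 2 - 1) * (1 - q) by apply: mulr_ge0; lra.
  have h3 : 0 <= x / 2 * (q * expR (- x)) by apply: mulr_ge0; nra.
  nra.
set mu := expR (- (x / 4)).
have emu : expR (- x) = mu ^+ 4.
  by rewrite /mu -expRM_natr; congr expR; lra.
have mu1 : mu >= 1 - x / 4.
  by have := expR_ge1Dx (- (x/4)); rewrite /mu; lra.
have mu2 : mu <= 1 by rewrite /mu expR_le1; lra.
rewrite emu.
have hA : 1 - mu ^+ 4 <= 2 * x * mu ^+ 2.
  have mu3 : 1/2 <= mu by lra.
  have hB : (1 + mu) * (1 + mu ^+ 2) <= 8 * mu ^+ 2.
    have h1 : 0 <= (mu - 1/2) * (1 - mu) by apply: mulr_ge0; lra.
    have h2 : 0 <= (mu - 1/2) * mu by apply: mulr_ge0; lra.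
    nra.
  have : 1 - mu ^+ 4 = (1 - mu) * ((1 + mu) * (1 + mu ^+ 2)) by ring.
  move=> ->.
  nra.
have hC : 4 * mu ^+ 2 * (q * (1 - q)) <= 1 - q + q * mu ^+ 4.
  have : 1 - q + q * mu ^+ 4 - 4 * mu ^+ 2 * (q * (1 - q)) =
     ((1 - q) - q * mu ^+ 2) ^+ 2 + q * (1 - q) * (1 - mu ^+ 2) ^+ 2 by ring.
  have : 0 <= ((1 - q) - q * mu ^+ 2) ^+ 2 + q * (1 - q) * (1 - mu ^+ 2) ^+ 2.
    apply: addr_ge0; first exact: sqr_ge0.
    apply: mulr_ge0; last exact: sqr_ge0. nra.
  lra.
have hq : 0 <= q * (1 - q) by nra.
have := ler_wpM2l hq hA.
nra.
Qed.


Lemma isd_ext (f g : R -> R) (x df dg : R) : (forall y, f y = g y) -> df = dg ->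
  is_derive x (1:R) g dg -> is_derive x (1:R) f df.
Proof. by move=> fg ->; have -> : f = g by apply/funext. Qed.

Lemma hoeff (q r : R) : 0 <= q <= 1 -> 0 <= r ->
  q * r + ln (1 - q + q * expR (- r)) <= r ^+ 2 / 4.
Proof.
move=> /andP[q0 q1] r0.
pose h x := 1 - q + q * expR (- x).
have hpos x : 0 < h x.
  rewrite /h; have := expR_gt0 (- x) => e0.
  have [q1'|q1'] := eqVneq q 1; first by rewrite q1' subrr add0r mul1r.
  have : q < 1 by rewrite lt_neqAle q1' q1.
  nra.
pose G x := q * x + ln (h x) - x ^+ 2 / 4.
have dE (x : R) : is_derive x (1:R) (fun y => expR (- y)) (expR (- x) * -1).
  apply: (@is_derive1_comp _ expR (fun y => - y)).
have dG (x : R) : is_derive x (1:R) G (q + (h x)^-1 * (q * (expR (- x) * -1)) - (x / 2)).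
  rewrite /G.
  apply: is_deriveB.
  apply: is_deriveD.
  - have := is_deriveZ q (@is_derive_id _ R x 1).
    by apply: isd_ext => [y|]; rewrite /GRing.scale /= ?mulr1.
  - have Dh : is_derive x (1:R) h (q * (expR (- x) * -1)).
      have := is_deriveD (@is_derive_cst _ R R (1 - q) x 1) (is_deriveZ q (dE x)).
      by apply: isd_ext => [y|]; rewrite /GRing.scale /= ?add0r.
    have := is_derive1_comp (is_derive1_ln (hpos x)) Dh.
    by apply: isd_ext.
  - have := is_deriveZ (4^-1) (is_deriveX 2 (@is_derive_id _ R x 1)).
    apply: isd_ext => [y|]; rewrite /GRing.scale /=; first by rewrite mulrC.
    rewrite expr1; lra.
have G0 : G 0 = 0.
  by rewrite /G /h oppr0 expR0 mulr1 subrK ln1 mulr0 expr0n /= mul0r !subr0 addr0.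
suff : G r <= G 0.
  by rewrite G0 /G /h subr_le0.
apply: (@ler0_derive1_nincry R G 0) => //.
- move=> x; rewrite in_itv /= andbT => x0.
  rewrite derive1E derive_val.
  have := key_ineq q x (ltac:(by rewrite q0 q1)) (ltac:(lra)).
  have hp := hpos x; rewrite /h in hp *.
  move=> K.
  rewrite -(@ler_pM2r _ (1 - q + q * expR (- x))) // mul0r.
  rewrite !mulrDl mulNr mulrAC mulVf ?gt_eqF // mul1r.
  nra.
- apply: derivable_within_continuous => x _.
  by have [] := dG x.
Qed.

Lemma ex_min (Y : finType) (y0 : Y) (F : Y -> R) : exists y1, forall y, F y1 <= F y.
Proof.
have [y1 _ H] := @arg_minP _ R Y y0 predT F isT.
by exists y1 => y; apply: H.
Qed.
Lemma ex_max (Y : finType) (y0 : Y) (F : Y -> R) : exists y1, forall y, F y <= F y1.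
Proof.
have [y1 _ H] := @arg_maxP _ R Y y0 predT F isT.
by exists y1 => y; apply: H.
Qed.
End S.

Section SM.
Context {R : realType} {Y : finType}.
Implicit Types (u v : Y -> R).

Definition Zs u := \sum_y expR (u y).
Definition sm u y := expR (u y) / Zs u.
Definition kl u v := \sum_y sm u y * ln (sm u y / sm v y).

Lemma Zs_gt0 (y0 : Y) u : 0 < Zs u.
Proof.
apply: (lt_le_trans (expR_gt0 (u y0))).
rewrite /Zs (bigD1 y0) //= lerDl; apply: sumr_ge0 => y _; exact: expR_ge0.
Qed.

Lemma sm_gt0 (y0 : Y) u y : 0 < sm u y.
Proof. by rewrite /sm divr_gt0 // ?expR_gt0 // (Zs_gt0 y0). Qed.

Lemma sum_sm (y0 : Y) u : \sum_y sm u y = 1.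
Proof. by rewrite /sm -mulr_suml divff // gt_eqF // (Zs_gt0 y0). Qed.

Lemma ln_div (a b : R) : 0 < a -> 0 < b -> ln (a / b) = ln a - ln b.
Proof.
move=> a0 b0; rewrite lnM ?lnV // posrE ?invr_gt0 //.
Qed.

Lemma ln_mul (a b : R) : 0 < a -> 0 < b -> ln (a * b) = ln a + ln b.
Proof. by move=> a0 b0; rewrite lnM // posrE. Qed.

Lemma ln_sm (y0 : Y) u y : ln (sm u y) = u y - ln (Zs u).
Proof. by rewrite /sm ln_div ?expR_gt0 ?(Zs_gt0 y0) // expRK. Qed.

Lemma kl_phi (y0 : Y) u v : kl u v =
  \sum_y sm u y * (expR (- ln (sm u y / sm v y)) - 1 + ln (sm u y / sm v y)).
Proof.
have He y : sm u y * (expR (- ln (sm u y / sm v y)) - 1 + ln (sm u y / sm v y))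
   = (sm v y - sm u y) + sm u y * ln (sm u y / sm v y).
  have pu := sm_gt0 y0 u y; have pv := sm_gt0 y0 v y.
  have K (z : R) : 0 < z -> expR (ln z) = z by move=> hz; apply: lnK; rewrite posrE.
  rewrite -lnV; last by rewrite posrE divr_gt0.
  have -> : expR (ln ((sm u y / sm v y)^-1)) = (sm u y / sm v y)^-1 by apply: K; rewrite invr_gt0 divr_gt0.
  rewrite invf_div; field; by rewrite gt_eqF.
rewrite (eq_bigr _ (fun y _ => He y)) big_split /= sumrB !(sum_sm y0) subrr add0r.
by [].
Qed.


Lemma phi_ge0 (w : R) : 0 <= expR (- w) - 1 + w.
Proof. have := expR_ge1Dx (- w); lra. Qed.

Lemma phi_lower (L w : R) : 1 <= L -> - L <= w -> w <= L ->
  w ^+ 2 / (4 * L ^+ 2) <= expR (- w) - 1 + w.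
Proof.
move=> L1 wl wu.
have L2 : 0 < 4 * L ^+ 2 by nra.
rewrite ler_pdivrMr //.
have [w2|w2] := leP w 2.
  have h1 := expR_ge1Dx (- (w / 2)).
  have h2 : expR (- w) = expR (- (w / 2)) ^+ 2.
    by rewrite -expRM_natr; congr expR; lra.
  have h3 : (1 - w / 2) ^+ 2 <= expR (- w).
    rewrite h2; apply: lerXn2r; rewrite ?nnegrE; try lra.
  have h4 : w ^+ 2 / 4 <= expR (- w) - 1 + w by nra.
  have h5 : 0 <= w ^+ 2 / 4 by nra.
  have h6 : 4 <= 4 * L ^+ 2 by nra.
  have := ler_pM h5 (ltac:(lra) : 0 <= 4) h4 h6.
  lra.
have := expR_gt0 (- w); nra.
Qed.

Lemma expR1_le3 : expR (1 : R) <= 3.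
Proof.
have h1 : 7 / 8 <= expR (- (1 / 8) : R) by have := expR_ge1Dx (- (1/8) : R); lra.
have h2 : expR (1 / 8 : R) <= 8 / 7.
  rewrite -[X in X <= _]invrK -expRN.
  have p : 0 < expR (- (1 / 8) : R) by apply: expR_gt0.
  rewrite -(@invf_div _ 7 8) lef_pV2 ?posrE //; lra.
have -> : expR (1 : R) = expR (1 / 8) ^+ 8.
  by rewrite -expRM_natl mul1r divff.
apply: (le_trans (y := (8 / 7) ^+ 8)).
  by apply: lerXn2r; rewrite ?nnegrE ?expR_ge0 //; lra.
rewrite expr_div_n ler_pdivrMr ?exprn_gt0 //.
by rewrite !exprS expr0; lra.
Qed.


Lemma ln_ratio (y0 : Y) u v y :
  ln (sm u y / sm v y) = (u y - v y) - (ln (Zs u) - ln (Zs v)).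
Proof.
rewrite ln_div ?(sm_gt0 y0) // !(ln_sm y0); lra.
Qed.

Lemma kl_alt (y0 : Y) u v :
  kl u v = \sum_y sm u y * (u y - v y) - (ln (Zs u) - ln (Zs v)).
Proof.
rewrite /kl (eq_bigr (fun y => sm u y * (u y - v y) - sm u y * (ln (Zs u) - ln (Zs v)))).
  by rewrite sumrB -mulr_suml (sum_sm y0) mul1r.
by move=> y _; rewrite (ln_ratio y0) mulrBr.
Qed.

Lemma sm_le1 (y0 : Y) u y : sm u y <= 1.
Proof.
rewrite -(sum_sm y0 u) (bigD1 y) //= lerDl.
by apply: sumr_ge0 => z _; apply: ltW; apply: (sm_gt0 y0).
Qed.

Lemma kl_ge0 (y0 : Y) u v : 0 <= kl u v.
Proof.
rewrite (kl_phi y0); apply: sumr_ge0 => y _.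
by apply: mulr_ge0; [apply: ltW; apply: (sm_gt0 y0) | apply: phi_ge0].
Qed.


Lemma sq_center (d : Y -> R) (c : R) : \sum_y d y = 0 ->
  \sum_y d y ^+ 2 <= \sum_y (d y - c) ^+ 2.
Proof.
move=> d0.
have -> : \sum_y (d y - c) ^+ 2 = \sum_y d y ^+ 2 + (\sum_(y : Y) (c ^+ 2) - 2 * c * \sum_y d y).
  rewrite mulr_sumr -sumrB -big_split /=; apply: eq_bigr => y _; ring.
rewrite d0 mulr0 subr0 lerDl; apply: sumr_ge0 => y _; exact: sqr_ge0.
Qed.

Lemma kl_lower (y0 : Y) u v (tau : R) : 0 < tau -> tau < 1 / 3 ->
  (forall y, tau <= sm u y) -> (forall y, tau <= sm v y) ->
  \sum_y (u y - v y) = 0 ->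
  \sum_y (u y - v y) ^+ 2 <= 4 * ln tau ^+ 2 / tau * kl u v.
Proof.
move=> t0 t3 hu hv hs.
set L := - ln tau.
have L1 : 1 <= L.
  have e3 := expR1_le3.
  have : tau <= expR (-1).
    rewrite expRN; apply: (le_trans (ltW t3)).
    rewrite ler_pdivrMr ?expR_gt0 // mulrC -ler_pdivrMr //; lra.
  rewrite -ler_ln ?posrE ?expR_gt0 // expRK /L; lra.
set c := ln (Zs u) - ln (Zs v).
pose w y := ln (sm u y / sm v y).
have wE y : w y = (u y - v y) - c by rewrite /w (ln_ratio y0).
have wb y : - L <= w y <= L.
  have lnu1 : ln (sm u y) <= 0 by apply: ln_le0; apply: (sm_le1 y0).
  have lnv1 : ln (sm v y) <= 0 by apply: ln_le0; apply: (sm_le1 y0).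
  have lnu2 : ln tau <= ln (sm u y) by rewrite ler_ln ?posrE ?(sm_gt0 y0).
  have lnv2 : ln tau <= ln (sm v y) by rewrite ler_ln ?posrE ?(sm_gt0 y0).
  rewrite /w ln_div ?(sm_gt0 y0) // /L; apply/andP; split; lra.
have Lp : 0 < 4 * L ^+ 2 by nra.
have H1 : \sum_y (u y - v y) ^+ 2 <= \sum_y w y ^+ 2.
  rewrite [X in _ <= X](eq_bigr (fun y => (u y - v y - c) ^+ 2)); last by move=> y _; rewrite wE.
  exact: sq_center.
have H2 : tau / (4 * L ^+ 2) * \sum_y w y ^+ 2 <= kl u v.
  rewrite (kl_phi y0) mulr_sumr; apply: ler_sum => y _.
  have /andP[wl wu] := wb y.
  have := phi_lower L (w y) L1 wl wu.
  rewrite -/(w y) => hp.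
  have h0 : 0 <= w y ^+ 2 / (4 * L ^+ 2) by apply: divr_ge0; [exact: sqr_ge0 | lra].
  have := ler_pM (ltW t0) h0 (hu y) hp.
  by rewrite mulrA mulrAC.
have -> : 4 * ln tau ^+ 2 = 4 * L ^+ 2 by rewrite /L sqrrN.
apply: (le_trans H1).
rewrite -(@ler_pM2l _ (tau / (4 * L ^+ 2))); last by apply: divr_gt0.
apply: (le_trans H2).
have hL : 4 * L ^+ 2 != 0 by rewrite gt_eqF.
have ht : tau != 0 by rewrite gt_eqF.
rewrite [X in _ <= X](_ : _ = kl u v) //. field.
rewrite ht /= oppr_eq0; apply/eqP => h; move: L1; rewrite /L h; lra.
Qed.


Lemma kl_upper (y0 : Y) u v : 2 * kl u v <= \sum_y (u y - v y) ^+ 2.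
Proof.
pose d y := u y - v y.
have [y1 hy1] := ex_min _ y0 d.
have [y2 hy2] := ex_max _ y0 d.
pose a := d y1; pose b := d y2; pose r := b - a.
have r0 : 0 <= r by rewrite /r subr_ge0; apply: hy1.
pose p := sm u.
have p0 y : 0 < p y by apply: (sm_gt0 y0).
have sp : \sum_y p y = 1 by apply: (sum_sm y0).
pose s y := d y - a.
have s0 y : 0 <= s y by rewrite /s subr_ge0; apply: hy1.
have sr y : s y <= r by rewrite /s /r lerB //; apply: hy2.
have Zu0 := Zs_gt0 y0 u.
have HZ : Zs v = Zs u * \sum_y p y * expR (- d y).
  rewrite mulr_sumr /Zs; apply: eq_bigr => y _.
  have : expR (u y) * expR (- d y) = expR (v y).
    by rewrite -expRD; congr expR; rewrite /d; ring.
  rewrite /p /sm /Zs => <-; field.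
  by rewrite gt_eqF //; exact: (Zs_gt0 y0 u).
pose T := \sum_y p y * expR (- s y).
have T0 : 0 < T.
  apply: (lt_le_trans (mulr_gt0 (p0 y0) (expR_gt0 (- s y0)))).
  rewrite /T (bigD1 y0) //= lerDl; apply: sumr_ge0 => y _.
  by apply: mulr_ge0; [exact: ltW | exact: expR_ge0].
have HT : \sum_y p y * expR (- d y) = expR (- a) * T.
  rewrite /T mulr_sumr; apply: eq_bigr => y _.
  by rewrite mulrCA -expRD /s; congr (_ * expR _); ring.
have Hkl : kl u v = \sum_y p y * s y + ln T.
  have S0 : 0 < \sum_y p y * expR (- d y) by rewrite HT mulr_gt0 // expR_gt0.
  rewrite (kl_alt y0) HZ (ln_mul _ _ Zu0 S0) HT (ln_mul _ _ (expR_gt0 _) T0) expRK.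
  have -> : \sum_y p y * s y = \sum_y sm u y * (u y - v y) - a.
    rewrite /s (eq_bigr (fun y => p y * d y - p y * a)); last by move=> y _; rewrite mulrBr.
    by rewrite sumrB -mulr_suml sp mul1r.
  lra.
pose m := \sum_y p y * s y.
have m0 : 0 <= m by apply: sumr_ge0 => y _; apply: mulr_ge0; [exact: ltW | exact: s0].
have mr : m <= r.
  rewrite -[r]mul1r -sp mulr_suml; apply: ler_sum => y _.
  by apply: ler_wpM2l; [exact: ltW | exact: sr].
pose qq := m / r.
have Hmr : m = qq * r.
  have [r00|rn0] := eqVneq r 0.
    by rewrite r00 mulr0; apply/le_anti; rewrite m0 -r00 mr.
  by rewrite /qq divfK.
have q0 : 0 <= qq by rewrite /qq divr_ge0.
have q1 : qq <= 1.
  have [r00|rn0] := eqVneq r 0; first by rewrite /qq r00 invr0 mulr0.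
  by rewrite /qq ler_pdivrMr ?mul1r // lt0r rn0 r0.
have HTb : T <= 1 - qq + qq * expR (- r).
  apply: (le_trans (y := \sum_y p y * (1 - (s y / r) * (1 - expR (- r))))).
    apply: ler_sum => y _; apply: ler_wpM2l; first exact: ltW.
    exact: chord.
  rewrite (eq_bigr (fun y => p y - (p y * s y) * (r^-1 * (1 - expR (- r))))); last first.
    by move=> y _; rewrite mulrBr mulr1 !mulrA.
  rewrite sumrB sp -mulr_suml -/m Hmr /qq.
  have [r00|rn0] := eqVneq r 0.
    rewrite r00 invr0 !mulr0 !mul0r; lra.
  rewrite divfK // mulrA mulrBr mulr1; lra.
have HlnT : ln T <= ln (1 - qq + qq * expR (- r)).
  by rewrite ler_ln // posrE //; apply: lt_le_trans HTb.
have Hh := hoeff qq r (ltac:(by rewrite q0 q1) : 0 <= qq <= 1) r0.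
have Hk : kl u v <= r ^+ 2 / 4 by rewrite Hkl -/m Hmr; lra.
have Hr : r ^+ 2 <= 2 * (a ^+ 2 + b ^+ 2).
  have E : r ^+ 2 + (a + b) ^+ 2 = 2 * (a ^+ 2 + b ^+ 2) by rewrite /r; ring.
  have := sqr_ge0 (a + b); lra.
have [e12|n12] := eqVneq y1 y2.
  have r00 : r = 0 by rewrite /r /b -e12 subrr.
  have : 2 * kl u v <= 0 by move: Hk; rewrite r00 expr0n /= mul0r; lra.
  move=> h; apply: (le_trans h); apply: sumr_ge0 => y _; exact: sqr_ge0.
have Hab : a ^+ 2 + b ^+ 2 <= \sum_y (u y - v y) ^+ 2.
  rewrite (bigD1 y1) //= (bigD1 y2) /=; last by rewrite eq_sym n12.
  rewrite addrA lerDl; apply: sumr_ge0 => y _; exact: sqr_ge0.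
lra.
Qed.


Lemma kl_upper' u v : 2 * kl u v <= \sum_y (u y - v y) ^+ 2.
Proof.
case: (pickP (@predT Y)) => [y0 _|hY]; first exact: (kl_upper y0).
by rewrite /kl !big_pred0 // mulr0.
Qed.

Lemma kl_ge0' u v : 0 <= kl u v.
Proof.
case: (pickP (@predT Y)) => [y0 _|hY]; first exact: (kl_ge0 y0).
by rewrite /kl !big_pred0.
Qed.

Lemma kl_alt' u v : kl u v =
  \sum_y expR (u y - ln (Zs u)) * (u y - v y) - (ln (Zs u) - ln (Zs v)).
Proof.
case: (pickP (@predT Y)) => [y0 _|hY]; last first.
  by rewrite /kl /Zs !big_pred0 // subrr subr0.
rewrite (kl_alt y0); congr (_ - _); apply: eq_bigr => y _; congr (_ * _).
rewrite /sm expRD expRN; congr (_ / _).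
by rewrite lnK // posrE; apply: (Zs_gt0 y0).
Qed.

End SM.

Lemma meas_logit (R : realType) (dd : measure_display) (X : measurableType dd)
  (Y : finType) (m : nat) (f : X -> 'rV[R]_m) (g : Y -> 'rV[R]_m)
  (hf : forall i : 'I_m, measurable_fun setT (fun x => f x 0 i)) (y : Y) :
  measurable_fun setT (fun x => logit f g x y).
Proof.
rewrite /logit; apply: measurable_sum => i.
apply: measurable_realfun.measurable_funM => //; exact: measurable_cst.
Qed.

Lemma sum_logit (R : realType) (dd : measure_display) (X : measurableType dd)
  (Y : finType) (m : nat) (f : X -> 'rV[R]_m) (g : Y -> 'rV[R]_m)
  (hg : unembedding_normalized g) x : \sum_y logit f g x y = 0.
Proof.
rewrite /logit exchange_big /=; apply: big1 => i _.
rewrite -mulr_sumr.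
have : (\sum_y g y) 0 i = 0 by rewrite hg mxE.
by rewrite summxE => ->; rewrite mulr0.
Qed.

Theorem mainTheorem1 (R : realType) (d : measure_display) (X : measurableType d)
  (P : probability X R) (Y : finType) (m : nat)
  (f f' : X -> 'rV[R]_m) (g g' : Y -> 'rV[R]_m)
  (hf : forall i : 'I_m, measurable_fun setT (fun x => f x 0 i))
  (hf' : forall i : 'I_m, measurable_fun setT (fun x => f' x 0 i))
  (hg : unembedding_normalized g) (hg' : unembedding_normalized g') :
  ((2%:E * d_KL P f f' g g' <= d_logit2 P f f' g g')%E) /\
  (forall tau : R, 0 < tau -> tau < 1 / 3 ->
     lower_bounded P f g tau -> lower_bounded P f' g' tau ->
     (d_logit2 P f f' g g' <= (4 * ln tau ^+ 2 / tau)%:E * d_KL P f f' g g')%E).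
Proof.
pose N x := \sum_y (logit f g x y - logit f' g' x y) ^+ 2.
pose K x := kl (logit f g x) (logit f' g' x).
have mN : measurable_fun setT N.
  apply: measurable_sum => y; apply: measurable_realfun.measurable_funX.
  by apply: measurable_realfun.measurable_funB; apply: meas_logit.
have mK : measurable_fun setT K.
  have -> : K = fun x => \sum_y expR (logit f g x y - ln (Zs (logit f g x))) *
        (logit f g x y - logit f' g' x y) -
      (ln (Zs (logit f g x)) - ln (Zs (logit f' g' x))).
    by apply/funext => x; rewrite /K kl_alt'.
  have mZ (h : X -> 'rV[R]_m) (k : Y -> 'rV[R]_m) :
      (forall i : 'I_m, measurable_fun setT (fun x => h x 0 i)) ->
      measurable_fun setT (fun x => ln (Zs (logit h k x))).
    move=> hh; apply: measurableT_comp; first exact: measurable_realfun.measurable_ln.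
    rewrite /Zs; apply: measurable_sum => y.
    apply: measurableT_comp; first exact: measurable_realfun.measurable_expR.
    exact: meas_logit.
  apply: measurable_realfun.measurable_funB; last by apply: measurable_realfun.measurable_funB; apply: mZ.
  apply: measurable_sum => y; apply: measurable_realfun.measurable_funM.
    apply: measurableT_comp; first exact: measurable_realfun.measurable_expR.
    by apply: measurable_realfun.measurable_funB; [apply: meas_logit | apply: mZ].
  by apply: measurable_realfun.measurable_funB; apply: meas_logit.
have K0 x : 0 <= K x by apply: kl_ge0'.
have N0 x : 0 <= N x by apply: sumr_ge0 => y _; apply: sqr_ge0.
have mKE := (measurable_EFinP [set: X] K).2 mK.
have mNE := (measurable_EFinP [set: X] N).2 mN.
have -> : d_KL P f f' g g' = (\int[P]_x (K x)%:E)%E by [].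
have -> : d_logit2 P f f' g g' = (\int[P]_x (N x)%:E)%E by [].
split.
  rewrite -ge0_integralZl //; last by move=> x _; rewrite lee_fin.
  apply: ge0_le_integral => //.
  - by move=> x _; rewrite -EFinM lee_fin mulr_ge0.
  - by apply: measurable_funeM.
  - by move=> x _; rewrite -EFinM lee_fin; apply: kl_upper'.
move=> tau t0 t3 hu hv.
have c0 : 0 <= 4 * ln tau ^+ 2 / tau by apply: divr_ge0; [nra | apply: ltW].
rewrite -ge0_integralZl //; last by move=> x _; rewrite lee_fin.
apply: ae_ge0_le_integral => //.
- by move=> x _; rewrite lee_fin.
- by move=> x _; rewrite -EFinM lee_fin mulr_ge0.
- by apply: measurable_funeM.
- move: hu hv; rewrite /lower_bounded.
  apply: filterS2 => x hx hx' _.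
  case: (pickP (@predT Y)) => [y0 _|hY]; last first.
    rewrite /N /K /kl !big_pred0 //. by rewrite mule0.
  rewrite -EFinM lee_fin; apply: (kl_lower y0) => //.
  by rewrite sumrB !sum_logit // subrr.
Qed.
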